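(* Let $q\ge3$ be an integer, let $c_1,\dots,c_q$ be nonnegative integers, and let $s=\sum_{i=1}^q c_i$. Then \[ \sum_{j=1}^q\sum_{k=0}^{c_j-1}\Big(\big((q-2)c_j-(q-1)k+s\big)\prod_{m=1}^{q-3}(s-k+m)\Big)=\prod_{m=2}^{q}(s+q-m). \]
   Context: An empty sum equals $0$ and an empty product equals $1$. *)

(* Defs.v *)
From mathcomp Require Import all_boot all_order all_algebra.

(* Main.v *)
From mathcomp Require Import all_boot all_order all_algebra.
From mathcomp Require Import ring zify.
Import GRing.Theory.
Local Open Scope ring_scope.

Definition PP (p : nat) (y : int) := \prod_(1 <= m < p.+1) (y + m%:Z).
Definition GG (p : nat) (y : int) := \prod_(1 <= m < p.+2) (y + m%:Z).

Lemma PS (n : nat) : n.+1%:Z = n%:Z + 1.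
Proof. by rewrite -addn1 PoszD. Qed.

Lemma GGr p y : GG p y = PP p y * (y + p%:Z + 1).
Proof. by rewrite /GG big_nat_recr //= PS addrA. Qed.

Lemma GGl p y : GG p (y - 1) = y * PP p y.
Proof.
rewrite /GG big_nat_recl // /PP; congr (_ * _); first by rewrite addrNK.
apply: eq_bigr => i _; rewrite PS; ring.
Qed.

Lemma L2 p x c : \sum_(0 <= k < c) ((p%:Z + 1) * PP p (x - k%:Z)) = GG p x - GG p (x - c%:Z).
Proof.
elim: c => [|c IH]; first by rewrite big_geq // subr0 subrr.
rewrite big_nat_recr //= IH.
have -> : x - c.+1%:Z = (x - c%:Z) - 1 by rewrite PS; ring.
rewrite GGl (GGr p (x - c%:Z)); ring.
Qed.

Lemma L1 p x c : \sum_(0 <= k < c) ((p%:Z + 2) * ((x - k%:Z) * PP p (x - k%:Z)))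
  = x * GG p x - (x - c%:Z) * GG p (x - c%:Z).
Proof.
elim: c => [|c IH]; first by rewrite big_geq // subr0 subrr.
rewrite big_nat_recr //= IH.
have -> : x - c.+1%:Z = (x - c%:Z) - 1 by rewrite PS; ring.
rewrite GGl (GGr p (x - c%:Z)); ring.
Qed.

Lemma inner p x c : \sum_(0 <= k < c)
  (((p%:Z + 1) * c%:Z - (p%:Z + 2) * k%:Z + x) * PP p (x - k%:Z)) = c%:Z * GG p x.
Proof.
transitivity (\sum_(0 <= k < c) ((p%:Z + 2) * ((x - k%:Z) * PP p (x - k%:Z)))
  - (x - c%:Z) * \sum_(0 <= k < c) ((p%:Z + 1) * PP p (x - k%:Z))).
  rewrite mulr_sumr -sumrB; apply: eq_bigr => k _; ring.
rewrite L1 L2; ring.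
Qed.

Lemma RHS p (s : int) : \prod_(2 <= m < (p + 3)%N.+1) (s + (p + 3)%N%:Z - m%:Z) = s * GG p s.
Proof.
rewrite big_nat_rev /=.
rewrite (@eq_big_nat _ _ _ 2 (p+3).+1 _ (fun i => s + (i%:Z - 2))); last first.
  move=> i /andP [h1 h2].
  have -> : (2 + (p + 3).+1 - i.+1)%N = ((p + 5) - i)%N by lia.
  have hi : (i <= p + 5)%N by lia.
  have -> : (((p + 5) - i)%N)%:Z = (p + 5)%N%:Z - i%:Z by rewrite -subzn.
  rewrite !PoszD; ring.
rewrite -[2%N]/(0 + 2)%N big_addn.
have -> : ((p + 3).+1 - 2 = p.+2)%N by lia.
rewrite big_nat_recl // /GG big_add1 /=.
congr (_ * _); first by rewrite subrr addr0.
apply: eq_bigr => i _; rewrite PoszD; ring.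
Qed.

Theorem lemmaA2 (q : nat) (c : 'I_q -> nat) (hq : (3 <= q)%N) :
  let s : int := (\sum_(i < q) c i)%N%:Z in
  \sum_(j < q) \sum_(0 <= k < c j)
     ((((q%:Z - 2) * (c j)%:Z - (q%:Z - 1) * k%:Z + s)
       * \prod_(1 <= m < (q - 3).+1) (s - k%:Z + m%:Z)) : int)
  = \prod_(2 <= m < q.+1) (s + q%:Z - m%:Z).
Proof.
move=> s.
have [p Hp] : exists p, q = (p + 3)%N by exists (q - 3)%N; rewrite subnK.
have -> : \prod_(2 <= m < q.+1) (s + q%:Z - m%:Z) = s * GG p s by rewrite Hp RHS.
have hq3 : (q - 3 = p)%N by rewrite Hp addnK.
rewrite hq3.
transitivity (\sum_(j < q) (c j)%:Z * GG p s).
  apply: eq_bigr => j _; rewrite -inner; apply: eq_bigr => k _.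
  rewrite /PP Hp PoszD; congr (_ * _); ring.
rewrite -mulr_suml /s (big_morph Posz PoszD (erefl 0%:Z)).
by [].
Qed.
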